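(* Let $p\ge1$, $X=\{0,1,\dots,p\}$, and $w=x_1x_2\cdots\in X^\infty\setminus\{0^\infty\}$; for $n\ge1$ let $w_n=x_1\cdots x_n$. Then $|\mathcal P^{w_n}_n|\le|\mathcal P^{w_{n+1}}_{n+1}|$ for every $n$ with $w_n\ne0^n$. Moreover $\lim_{n}|\mathcal P^{w_n}_n|<\infty$ if and only if $w$ is cofinal to a word in $\{0,i\}^\infty$ for some $i\in X$.
   Context: $\mathcal G_{S_p}$ is generated by $e_1,\dots,e_p$ acting on $X^\ast$ by $e_i(0w)=i\,e_i(w)$, $e_i(iw)=0w$, $e_i(jw)=jw$ for $j\notin\{0,i\}$. $\Gamma^p_n$ is the Schreier graph on $X^n$ with an edge labelled $e_j$ joining $v$ and $e_j(v)$ for all $v,j$. An $e_j$-cycle is the $\langle e_j\rangle$-orbit of a vertex with its $e_j$-labelled edges; $C_n^i$ is the $e_i$-cycle with vertex set $\{0,i\}^n$. Let $B_n$ be the bipartite graph whose vertices are the vertices of $\Gamma^p_n$ and the $e$-cycles of length $\ge2$, a vertex being joined to each such cycle containing it ($B_n$ is a tree). Removing $0^n$ from $\Gamma^p_n$ leaves $p$ components; the $i$-th petal contains $C_n^i\setminus\{0^n\}$. For $u\ne0^n$ in the $i$-th petal, the path of cycles $\mathcal P^u_n$ is the sequence of cycles met along the unique path in $B_n$ from $u$ to $C_n^i$, and $|\mathcal P^u_n|$ its number of cycles. Two infinite words are cofinal if they differ in only finitely many positions. *)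

(* Defs.v *)
From mathcomp Require Import all_boot.
Set Implicit Arguments. Unset Strict Implicit. Unset Printing Implicit Defensive.

Section Grigorchuk.
Variable p : nat.
Notation X := 'I_p.+1.
Definition x0 : X := ord0.

Fixpoint eseq (i : X) (s : seq X) : seq X :=
  match s with
  | [::] => [::]
  | x :: t => if x == x0 then i :: eseq i t
              else if x == i then x0 :: t else x :: t
  end.

Lemma size_eseq i s : size (eseq i s) = size s.
Proof.
elim: s => [|x t IH] //=.
by case: ifP => _ /=; [rewrite IH | case: ifP].
Qed.

Variable n : nat.
Definition word := (n.-tuple X).

Definition e (i : X) (v : word) : word := Tuple (introT eqP (etrans (size_eseq i v) (size_tuple v))).

Definition zero_word : word := [tuple of nseq n x0].

Definition gadj (u v : word) : bool :=
  [exists j : X, (j != x0) && ((e j u == v) || (e j v == u))].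

Definition Cset (i : X) : {set word} :=
  [set v : word | all (fun x => (x == x0) || (x == i)) v].

(* u lies in the i-th petal: component of Gamma minus 0^n containing C_n^i \ {0^n} *)
Definition avoid0 (u v : word) : bool :=
  [&& u != zero_word, v != zero_word & gadj u v].
Definition in_petal (i : X) (u : word) : bool :=
  [&& i != x0, u != zero_word &
     [exists v, [&& v \in Cset i, v != zero_word & connect avoid0 u v]]].

(* u and v lie on a common e_j-cycle of length >= 2 (a cycle node of B_n) *)
Definition share_cycle (u v : word) : bool :=
  [exists j : X, [&& j != x0, e j u != u & fconnect (e j) u v]].

Fixpoint reach (u : word) (k : nat) : {set word} :=
  if k is k'.+1 then
    reach u k' :|: [set v | [exists x in reach u k', share_cycle x v]]
  else [set u].

(* |P^u_n| : number of cycles on the (unique, hence shortest) path in B_n from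
   u to C_n^i, where i is the petal of u.  A path u, C_1, v_1, ..., v_{k-1}, C_k = C_n^i
   has k cycles and consists of k-1 cycle steps from u to v_{k-1} in C_n^i. *)
Definition petal_index (u : word) : X :=
  odflt x0 [pick i | in_petal i u].
Definition path_len (u : word) : nat :=
  (find (fun k => [exists v in reach u k, v \in Cset (petal_index u)])
        (iota 0 #|{: word}|.+1)).+1.

End Grigorchuk.

(* w_n = x_1 ... x_n, with w : nat -> X, w 0 = x_1 *)
Definition pref (p : nat) (w : nat -> 'I_p.+1) (n : nat) : n.-tuple 'I_p.+1 :=
  [tuple w (nat_of_ord k) | k < n].

Definition cofinal_to_0i (p : nat) (w : nat -> 'I_p.+1) (i : 'I_p.+1) : Prop :=
  exists v : nat -> 'I_p.+1,
    (forall m, (v m == ord0) || (v m == i)) /\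
    (exists N, forall m, N <= m -> w m = v m).

(* Main.v *)
From Stdlib Require Import Classical.
Require Import Defs.
From mathcomp Require Import all_boot zify.
Set Implicit Arguments. Unset Strict Implicit. Unset Printing Implicit Defensive.

Section Seqs.
Variable p : nat.
Notation X := 'I_p.+1.
Notation z0 := (x0 p).

Definition drop1 (a : X) (l : seq X) :=
  if l is b :: l' then (if b == a then l' else l) else l.

Fixpoint cc (s : seq X) : seq X :=
  if s is x :: t then (if x == z0 then cc t else x :: drop1 x (cc t)) else [::].

Lemma drop1_eseq (j : X) (s : seq X) : j != z0 -> drop1 j (cc (eseq j s)) = drop1 j (cc s).
Proof.
move=> jn; elim: s => [|x t IH] //=.
case: (eqVneq x z0) => [_|xn] /=; first by rewrite (negbTE jn) /= eqxx.
case: (eqVneq x j) => [->|xj] /=; first by [].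
by rewrite (negbTE xn) /= (negbTE xj).
Qed.

Lemma drop1_iter (j : X) (s : seq X) m : j != z0 ->
  drop1 j (cc (iter m (eseq j) s)) = drop1 j (cc s).
Proof. by move=> jn; elim: m => [|m IH] //=; rewrite drop1_eseq. Qed.

Lemma size_drop1 (a : X) l : size l <= (size (drop1 a l)).+1.
Proof. by case: l => [|b l] //=; case: ifP. Qed.

Lemma size_drop1_le (a : X) l : size (drop1 a l) <= size l.
Proof. by case: l => [|b l] //=; case: ifP => // _; apply: leqnSn. Qed.

Lemma drop1_nil (a : X) l : drop1 a l = [::] -> l = [::] \/ l = [:: a].
Proof. by case: l => [|b [|c l]] //= ; [left | case: ifP => // /eqP -> _; right | case: ifP]. Qed.

Lemma all_drop1 (P : pred X) (a : X) l : all P l -> all P (drop1 a l).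
Proof. by case: l => [|b l] //=; case: ifP => // _ /andP []. Qed.

Lemma cc_nz (s : seq X) : all (fun x => x != z0) (cc s).
Proof.
elim: s => [|x t IH] //=; case: ifP => // xn /=; rewrite xn /=.
exact: all_drop1.
Qed.

Lemma cc_nil (s : seq X) : (cc s == [::]) = all (pred1 z0) s.
Proof.
elim: s => [|x t IH] //=; case: (eqVneq x z0) => [_|xn] //=.

Qed.

Lemma size_cc (s : seq X) : size (cc s) <= size s.
Proof.
elim: s => [|x t IH] //=; case: ifP => _ /=; first exact: leqW.
exact: leq_ltn_trans (size_drop1_le _ _) _.
Qed.

Lemma cc_Cset (i : X) (s : seq X) : all (fun x => (x == z0) || (x == i)) s ->
  cc s = [::] \/ cc s = [:: i].
Proof.
elim: s => [|x t IH] /=; first by left.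
case/andP => /orP [] /eqP -> /IH; first by rewrite eqxx.
case: (eqVneq i z0) => [_|_] //.
by case=> -> /=; right; rewrite ?eqxx.
Qed.

Lemma Cset_cc (i : X) (s : seq X) : cc s = [:: i] -> all (fun x => (x == z0) || (x == i)) s.
Proof.
elim: s => [|x t IH] //=.
case: (eqVneq x z0) => [->|xn] /=; first exact: IH.
case=> xi; subst i => /drop1_nil [] H; rewrite eqxx /=.
  move/eqP: H; rewrite cc_nil => /allP H; apply/allP => y /H /eqP ->.
  by rewrite eqxx.
exact: IH.
Qed.

Lemma cc_nseq k (r : seq X) : cc (nseq k z0 ++ r) = cc r.
Proof. by elim: k => [|k IH] //=; rewrite eqxx. Qed.

Lemma iter2 (j : X) k (t : seq X) : j != z0 ->
  iter k.*2 (eseq j) (z0 :: t) = z0 :: iter k (eseq j) t.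
Proof.
move=> jn; elim: k => [|k IH] //.
by rewrite doubleS !iterS IH /= (negbTE jn) eqxx.
Qed.

Lemma orbit0 (j : X) (s1 r : seq X) : j != z0 -> all (fun x => (x == z0) || (x == j)) s1 ->
  exists m, iter m (eseq j) (s1 ++ r) = nseq (size s1) z0 ++ r.
Proof.
move=> jn; elim: s1 => [|a s1 IH] /=; first by exists 0.
case/andP => /orP [] /eqP -> /IH [m Hm].
  by exists m.*2; rewrite iter2 // Hm.
exists m.*2.+1; rewrite iterSr /= (negbTE jn) eqxx iter2 //.
by rewrite Hm.
Qed.

Lemma decomp (s : seq X) (j y : X) l : cc s = j :: y :: l ->
  exists s1 r, [/\ s = s1 ++ r, all (fun x => (x == z0) || (x == j)) s1
                 & cc r = y :: l].
Proof.
elim: s => [|x t IH] //=.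
case: (eqVneq x z0) => [->|xn].
  move=> /IH [s1 [r [-> H1 H2]]].
  by exists (z0 :: s1), r; split => //=; rewrite ?eqxx.
case=> xj; subst j.
case E: (cc t) => [|b l'] //=.
case: (eqVneq b x) => [eb H|bx].
  move: E; rewrite eb H => /IH [s1 [r [-> H1 H2]]].
  by exists (x :: s1), r; split => //=; rewrite eqxx orbT.
case=> yb lb; exists [:: x], t; split => //=; first by rewrite eqxx orbT.
by rewrite E yb lb.
Qed.

Lemma eseq_neq (j : X) (s : seq X) l : cc s = j :: l -> eseq j s != s.
Proof.
case: s => [|x t] //=.
case: (eqVneq x z0) => [->|xn].
  move=> H; apply/negP => /eqP [] jz; move: (cc_nz t); rewrite H /= jz.
  by rewrite eqxx.
case=> xj _; subst j; rewrite eqxx.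
by apply/negP => /eqP [] /eqP; rewrite eq_sym (negbTE xn).
Qed.

Lemma cc_rcons (s : seq X) (x : X) : cc (rcons s x) =
  if (x == z0) || (last z0 (cc s) == x) then cc s else rcons (cc s) x.
Proof.
elim: s => [|a t IH] /=.
  by case: (eqVneq x z0) => [_|xn] //=; rewrite eq_sym (negbTE xn).
case: (eqVneq a z0) => [_|an] //.
rewrite IH; case: (eqVneq x z0) => [_|xn] //=.
case E: (cc t) => [|b l] /=.
  rewrite eq_sym (negbTE xn) /=.
  by case: (eqVneq x a) => [<-|xa].
case: (eqVneq b a) => [->|ba] /=.
  case: (eqVneq (last a l) x) => [_|_] //=; by rewrite eqxx.
case: (eqVneq (last b l) x) => [_|_] //=; by rewrite (negbTE ba).
Qed.

End Seqs.

Section W.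
Variables p n : nat.
Notation X := 'I_p.+1.
Notation z0 := (x0 p).
Notation W := (word p n).

Lemma val_iter (j : X) (u : W) m : (iter m (e j) u : seq X) = iter m (eseq j) u.
Proof. by elim: m => [|m IH] //=; rewrite -IH. Qed.

Lemma zero_cc (u : W) : (u == zero_word p n) = (cc u == [::]).
Proof.
rewrite cc_nil; apply/eqP/all_pred1P => [->|H]; first by rewrite /= size_nseq.
by apply: val_inj => /=; rewrite H size_tuple.
Qed.

Lemma share_lb (x y : W) : share_cycle x y -> size (cc x) <= (size (cc y)).+1.
Proof.
case/existsP => j /and3P [jn _ con].
have cl : closed (frel (e j)) [pred z : W | drop1 j (cc z) == drop1 j (cc x)].
  by move=> a b /eqP <- /=; rewrite !inE /= (drop1_eseq _ jn).
have := closed_connect cl con; rewrite !inE /= eqxx => /esym/eqP inv.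
apply: leq_trans (size_drop1 j _) _; rewrite -inv ltnS size_drop1_le //.
Qed.

Lemma reach_lb (u v : W) k : v \in reach u k -> size (cc u) <= size (cc v) + k.
Proof.
elim: k v => [|k IH] v /=; first by rewrite inE => /eqP ->; rewrite addn0.
rewrite inE => /orP [/IH H|]; first by apply: leq_trans H _; rewrite leq_add2l.
rewrite inE => /existsP [x /andP [xin sc]].
have := IH _ xin; have := share_lb sc; lia.
Qed.

Lemma reach_step (u u' v : W) k : share_cycle u u' -> v \in reach u' k -> v \in reach u k.+1.
Proof.
move=> sc; elim: k v => [|k IH] v /=.
  rewrite inE => /eqP ->; rewrite !inE; apply/orP; right.
  by apply/existsP; exists u; rewrite inE eqxx.
rewrite inE => /orP [/IH H|]; first by rewrite inE H.
rewrite inE => /existsP [x /andP [xin sc']].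
rewrite inE; apply/orP; right; rewrite inE; apply/existsP; exists x.
by rewrite IH.
Qed.

Lemma conn_iter (j : X) (u : W) m : j != z0 -> drop1 j (cc u) != [::] ->
  connect (@avoid0 p n) u (iter m (e j) u).
Proof.
move=> jn dn.
have nz i : iter i (e j) u != zero_word p n.
  rewrite zero_cc val_iter; apply/eqP => H; move: dn.
  by rewrite -(drop1_iter _ i jn) H.
elim: m => [|m IH]; first exact: connect0.
apply: connect_trans IH _; apply: connect1.
rewrite /avoid0 !nz /=; apply/existsP; exists j; rewrite jn /=.
by rewrite eqxx.
Qed.

Lemma last_drop1 (a : X) l : drop1 a l != [::] -> last z0 (drop1 a l) = last z0 l.
Proof. by case: l => [|c [|d l]] //=; case: ifP. Qed.

Lemma last_step (j : X) (s : seq X) : j != z0 -> cc s != [::] -> cc (eseq j s) != [::] ->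
  last z0 (cc (eseq j s)) = last z0 (cc s).
Proof.
move=> jn n1 n2; have H := drop1_eseq s jn.
case E: (drop1 j (cc s)) => [|b l].
  rewrite E in H; case/drop1_nil: H => H1; first by move: n2; rewrite H1.
  case/drop1_nil: E => E; first by move: n1; rewrite E.
  by rewrite H1 E.
have A : last z0 (drop1 j (cc (eseq j s))) = last z0 (cc (eseq j s)).
  by apply: last_drop1; rewrite H E.
have B : last z0 (drop1 j (cc s)) = last z0 (cc s).
  by apply: last_drop1; rewrite E.
by rewrite -A -B H.
Qed.

Lemma last_avoid (u v : W) : connect (@avoid0 p n) u v -> last z0 (cc v) = last z0 (cc u).
Proof.
move=> con.
have cl : closed (@avoid0 p n) [pred z : W | last z0 (cc z) == last z0 (cc u)].
  move=> a b /and3P [an bn /existsP [j /andP [jn /orP [] /eqP H]]] /=;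
    rewrite -H in an bn * ; rewrite !zero_cc in an bn; rewrite !inE /=;
    by rewrite (last_step jn).
have := closed_connect cl con; rewrite !inE /= eqxx => /esym/eqP //.
Qed.

Lemma in_petal_last i (u : W) : in_petal i u -> i = last z0 (cc u).
Proof.
case/and3P => _ un /existsP [v /and3P [vC vn con]].
rewrite -(last_avoid con); rewrite inE in vC; rewrite zero_cc in vn.
by case: (cc_Cset vC) => E; [move: vn; rewrite E | rewrite E].
Qed.

Lemma construct k (u : W) : size (cc u) = k.+1 ->
  exists v : W, [/\ v \in reach u k, cc v = [:: last z0 (cc u)] & connect (@avoid0 p n) u v].
Proof.
elim: k u => [|k IH] u.
  case E: (cc u) => [|a [|b l]] //= _; exists u; split => //; first by rewrite inE.
case E: (cc u) => [|j [|y l]] //= [Hs].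
have [s1 [r [Eu H1 H2]]] := decomp E.
have jn : j != z0 by move: (cc_nz u); rewrite E /= => /andP [].
have [m Hm] := orbit0 r jn H1.
pose u' := iter m (e j) u.
have cu' : cc u' = y :: l by rewrite /u' val_iter Eu Hm cc_nseq.
have [|v [vin cv con]] := IH u'; first by rewrite cu' /=; lia.
exists v; split.
- apply: reach_step vin; apply/existsP; exists j; rewrite jn /=.
  rewrite fconnect_iter andbT -(inj_eq val_inj) /=.
  exact: eseq_neq E.
- by rewrite cv cu'.
- apply: connect_trans _ con; apply: conn_iter jn _.
  by rewrite E /= eqxx.
Qed.

End W.

Section W3.
Variables p n : nat.
Notation X := 'I_p.+1.
Notation z0 := (x0 p).
Notation W := (word p n).

Lemma petal_idx (u : W) : u != zero_word p n -> petal_index u = last z0 (cc u).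
Proof.
rewrite zero_cc => un.
have sz : size (cc u) = (size (cc u)).-1.+1 by rewrite prednK // lt0n size_eq0.
have [v [vin cv con]] := construct sz.
rewrite /petal_index; case: pickP => [i /in_petal_last -> //|H].
have : in_petal (last z0 (cc u)) u.
  apply/and3P; split; last first.
  - by apply/existsP; exists v; rewrite inE (Cset_cc cv) zero_cc cv /=.
  - by rewrite zero_cc.
  case E: (cc u) un => [|a l] // _.
  move: (cc_nz u); rewrite E /= => /andP [an al].
  have := mem_last a l; rewrite inE => /orP [/eqP -> //| H'].
  exact: (allP al _ H').
by rewrite H.
Qed.

Lemma path_len_eq (u : W) : 0 < p -> u != zero_word p n -> path_len u = size (cc u).
Proof.
move=> p0 un.
have un' := un; rewrite zero_cc in un'.
have s0 : 0 < size (cc u) by rewrite lt0n size_eq0.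
have [v [vin cv con]] := construct (esym (prednK s0)).
rewrite /path_len.
set P := (fun k => _).
have Ps : P (size (cc u)).-1.
  by rewrite /P; apply/existsP; exists v; rewrite vin /= (petal_idx un) inE (Cset_cc cv).
have Hn : (size (cc u)).-1 < #|{: W}|.+1.
  have h1 : size (cc u) <= n by have := size_cc u; rewrite size_tuple.
  have h2 : n < #|{: W}| by rewrite card_tuple card_ord; apply: ltn_expl.
  lia.
have hasP : has P (iota 0 #|{: W}|.+1) by apply/hasP; exists (size (cc u)).-1; rewrite ?mem_iota.
have lt := hasP; rewrite has_find size_iota in lt.
have Pk := nth_find 0 hasP; rewrite nth_iota // add0n in Pk.
have le1 : find P (iota 0 #|{: W}|.+1) <= (size (cc u)).-1.
  rewrite leqNgt; apply/negP => H; have := before_find 0 H.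
  by rewrite nth_iota // add0n Ps.
have le2 : size (cc u) <= (find P (iota 0 #|{: W}|.+1)).+1.
  case/existsP: Pk => v' /andP [v'in v'C].
  have := reach_lb v'in; rewrite inE in v'C.
  case: (cc_Cset v'C) => -> /=; lia.
lia.
Qed.

End W3.

Lemma pref_eq (p : nat) (w : nat -> 'I_p.+1) n : (pref w n : seq _) = map w (iota 0 n).
Proof. by rewrite /pref /= -val_enum_ord -map_comp. Qed.

Theorem proposition4p12 (p : nat) (w : nat -> 'I_p.+1) :
  0 < p ->
  (exists m, w m != ord0) ->
  (forall n, 0 < n -> pref w n != zero_word p n ->
     path_len (pref w n) <= path_len (pref w n.+1)) /\
  ((exists L N, forall n, N <= n -> path_len (pref w n) = L) <->
   (exists i : 'I_p.+1, cofinal_to_0i w i)).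
Proof.
move=> p0 [m0 wm0].
pose c n := cc (map w (iota 0 n)).
have cS n : c n.+1 = if (w n == x0 p) || (last (x0 p) (c n) == w n) then c n
                     else rcons (c n) (w n).
  rewrite /c; have -> : iota 0 n.+1 = rcons (iota 0 n) n by rewrite -cats1 -addn1 iotaD add0n.
  by rewrite map_rcons cc_rcons.
have pl n : pref w n != zero_word p n -> path_len (pref w n) = size (c n).
  by move=> H; rewrite path_len_eq // pref_eq.
have mono n : size (c n) <= size (c n.+1).
  by rewrite cS; case: ifP => // _; rewrite size_rcons.
have monoL n1 k : size (c n1) <= size (c (n1 + k)).
  elim: k => [|k IH]; first by rewrite addn0.
  by apply: leq_trans IH _; rewrite addnS.
have nzS n : pref w n != zero_word p n -> pref w n.+1 != zero_word p n.+1.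
  rewrite !zero_cc !pref_eq -/(c n) -/(c n.+1) cS.
  by case: ifP => // _ _; case: (c n).
have nzN n : m0 < n -> pref w n != zero_word p n.
  move=> Hn; rewrite zero_cc pref_eq cc_nil; apply/negP => /allP H.
  have : w m0 \in map w (iota 0 n) by apply: map_f; rewrite mem_iota.
  by move/H => /eqP E; rewrite E eqxx in wm0.
split.
  by move=> n _ H; rewrite (pl n H) (pl n.+1 (nzS n H)); exact: mono.
split.
  move=> [L [N HL]]; pose N' := maxn N m0.+1.
  have SC n : N' <= n -> size (c n) = L.
    move=> Hn; rewrite -(pl n); [apply: HL | apply: nzN]; lia.
  have eqz n : N' <= n -> (w n == x0 p) || (last (x0 p) (c n) == w n).
    move=> Hn; have := SC n.+1 (leqW Hn); rewrite cS.
    case: ifP => // _; rewrite size_rcons (SC n Hn); lia.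
  have lastc k : last (x0 p) (c (N' + k)) = last (x0 p) (c N').
    elim: k => [|k IH]; first by rewrite addn0.
    by rewrite addnS cS eqz ?leq_addr.
  exists (last (x0 p) (c N')), (fun m => if m < N' then ord0 else w m); split.
    move=> m; case: ifP => [_|/negbT]; first by rewrite eqxx.
    rewrite -leqNgt => Hm; have := eqz m Hm.
    rewrite -(subnKC Hm) lastc; case/orP => [->//|/eqP ->].
    by rewrite eqxx orbT.
  by exists N' => m Hm; rewrite ltnNge Hm.
move=> [i [v [Hv [N HN]]]]; pose N' := maxn N m0.+1.
have wi m : N' <= m -> (w m == x0 p) || (w m == i).
  by move=> Hm; rewrite HN; [exact: Hv | lia].
have claim k : size (c (N' + k)) = size (c N') \/
   (size (c (N' + k)) = (size (c N')).+1 /\ last (x0 p) (c (N' + k)) = i).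
  elim: k => [|k IH]; first by left; rewrite addn0.
  rewrite addnS cS.
  case/orP: (wi (N' + k) (leq_addr _ _)) => /eqP E.
    by rewrite E eqxx /=.
  case: IH => [IH|[IH1 IH2]].
    case: ifP => _; first by left.
    by right; rewrite size_rcons last_rcons IH E.
  by rewrite IH2 E eqxx orbT; right.
have plN n : N' <= n -> path_len (pref w n) = size (c n).
  by move=> Hn; apply: pl; apply: nzN; lia.
case: (classic (exists k, size (c (N' + k)) = (size (c N')).+1)) => [[k Hk]|H].
  exists (size (c N')).+1, (N' + k) => n Hn.
  rewrite plN; last by lia.
  have := monoL (N' + k) (n - (N' + k)); rewrite subnKC // Hk.
  have := claim (n - N'); rewrite subnKC; last by lia.
  lia.
exists (size (c N')), N' => n Hn; rewrite plN //.
have := claim (n - N'); rewrite subnKC //.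
case=> // [[E _]]; exfalso; apply: H; exists (n - N'); rewrite subnKC //.
Qed.
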